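(* Let $n>0$ be an integer of length $l$. Then $$\lim_{k\to\infty}\ \sum_{\substack{m:\ \mathrm{ld}_l(m)=n\\ k(m)=k}}\frac1m=b\log\!\left(1+\frac1n\right),$$ where the sum is over all positive integers $m$ whose base-$b$ representation starts with that of $n$ and contains exactly $k$ occurrences of $d$.
   Context: Fix $b\ge2$ and $d\in\{0,\dots,b-1\}$. For an integer $n\ge0$, its length $l(n)$ is the smallest $l\ge0$ with $n<b^l$, and $k(n)$ is the number of occurrences of $d$ in its base-$b$ representation without leading zeros. For $m>0$ of length $q\ge l$, $\mathrm{ld}_l(m)=\lfloor m/b^{q-l}\rfloor$ (only $m$ of length $\ge l$ are considered). *)

(* Defs.v *)
From mathcomp Require Import all_boot all_order all_algebra.
From mathcomp Require Import all_classical all_reals all_analysis.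
Set Implicit Arguments. Unset Strict Implicit. Unset Printing Implicit Defensive.

(* base-b digits of n, least significant first, without leading zeros
   (digits of 0 is the empty list). Fuel n suffices since n %/ b < n for b >= 2. *)
Fixpoint digits_aux (b fuel n : nat) : seq nat :=
  match fuel with
  | 0 => [::]
  | f.+1 => if n == 0 then [::] else (n %% b) :: digits_aux b f (n %/ b)
  end.
Definition digits (b n : nat) : seq nat := digits_aux b n n.

Definition blen (b n : nat) : nat := size (digits b n).

Definition kcount (b d n : nat) : nat := count (pred1 d) (digits b n).

Definition ld (b l m : nat) : nat := m %/ b ^ (blen b m - l).

Definition admissible (b d n k m : nat) : bool :=
  [&& 0 < m, blen b n <= blen b m, ld b (blen b n) m == n & kcount b d m == k].

(* Main.v *)
Require Import Defs.
From mathcomp Require Import all_boot all_order all_algebra.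
From mathcomp Require Import all_classical all_reals all_analysis.
From mathcomp Require Import zify ring lra.
Set Implicit Arguments. Unset Strict Implicit. Unset Printing Implicit Defensive.
Import Order.TTheory GRing.Theory Num.Theory.
Import numFieldNormedType.Exports.


Section Dig.
Variables (b d : nat).
Hypothesis hb : (2 <= b)%N.

Lemma digits_aux_fuel f1 f2 x : x <= f1 -> x <= f2 ->
  digits_aux b f1 x = digits_aux b f2 x.
Proof.
elim: f1 f2 x => [|f1 IH] [|f2] x /=.
- by [].
- by rewrite leqn0 => /eqP ->.
- by rewrite leqn0 => _ /eqP ->.
move=> h1 h2; case: eqP => // /eqP x0; congr (_ :: _); apply: IH.
  have : x %/ b < x by rewrite ltn_Pdiv // lt0n.
  lia.
have : x %/ b < x by rewrite ltn_Pdiv // lt0n.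
lia.
Qed.

Lemma digitsS m : 0 < m -> digits b m = (m %% b) :: digits b (m %/ b).
Proof.
case: m => [//|m] _; rewrite /digits /=.
congr (_ :: _); apply: digits_aux_fuel => //.
have : m.+1 %/ b < m.+1 by rewrite ltn_Pdiv // lt0n.
lia.
Qed.

Lemma blenS m : 0 < m -> blen b m = (blen b (m %/ b)).+1.
Proof. by move=> m0; rewrite /blen digitsS. Qed.

Lemma kcountS m : 0 < m -> kcount b d m = (m %% b == d) + kcount b d (m %/ b).
Proof. by move=> m0; rewrite /kcount digitsS. Qed.

Lemma kcount_le1 m : kcount b d m <= (kcount b d (m %/ b)).+1.
Proof.
case: m => [|m]; first by rewrite /kcount /digits.
rewrite kcountS //; case: (_ == _) => /=; lia.
Qed.

Lemma kcount_pow j m : kcount b d m <= kcount b d (m %/ b ^ j) + j.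
Proof.
elim: j m => [|j IH] m; first by rewrite expn0 divn1 addn0.
apply: leq_trans (kcount_le1 m) _.
rewrite expnS divnMA.
have := IH (m %/ b); lia.
Qed.

Lemma blen_pow j m : 0 < m %/ b ^ j -> blen b m = blen b (m %/ b ^ j) + j.
Proof.
elim: j m => [|j IH] m; first by rewrite expn0 divn1 addn0.
rewrite expnS divnMA => h.
have hm : 0 < m %/ b.
  case: (posnP (m %/ b)) => // e; move: h; by rewrite e div0n.
have m0 : 0 < m by case: (posnP m) hm => // ->; rewrite div0n.
by rewrite blenS // (IH _ h) addnS.
Qed.

Lemma divnMb N a : a < b -> (N * b + a) %/ b = N.
Proof. move=> ab; rewrite divnMDl ?divn_small //; lia. Qed.
Lemma modnMb N a : a < b -> (N * b + a) %% b = a.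
Proof. move=> ab; rewrite modnMDl modn_small //. Qed.

Lemma kcountMb N a : 0 < N -> a < b -> kcount b d (N * b + a) = (a == d) + kcount b d N.
Proof.
move=> N0 ab; rewrite kcountS ?divnMb ?modnMb //.
have : 0 < N * b by rewrite muln_gt0 N0; lia.
lia.
Qed.

End Dig.


Section Real.
Variables (R : realFieldType) (b d : nat).
Hypothesis hb : (2 <= b)%N.
Local Open Scope ring_scope.

Lemma block_sum (h : nat -> R) c M :
  \sum_(0 <= i < c * M) h i = \sum_(0 <= a < c) \sum_(0 <= i < M) h (a * M + i)%N.
Proof.
elim: c => [|c IH]; first by rewrite mul0n !big_geq.
rewrite big_nat_recr //= -IH (big_cat_nat _ (n := (c * M)%N)) //=; last first.
  by rewrite mulSn; lia.
congr (_ + _).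
rewrite mulSn addnC -{1}(add0n (c * M)%N) big_addn.
rewrite addKn; apply: eq_bigr => i _; by rewrite addnC.
Qed.

Definition g k m : R := if kcount b d m == k then (m%:R)^-1 else 0.
Definition Lay N j k := \sum_(0 <= i < b ^ j) g k (N * b ^ j + i)%N.

Lemma g_ge0 k m : 0 <= g k m.
Proof. rewrite /g; case: eqP => // _; by rewrite invr_ge0 ler0n. Qed.

Lemma Lay_ge0 N j k : 0 <= Lay N j k.
Proof. by apply: sumr_ge0 => i _; apply: g_ge0. Qed.

Lemma Lay_split N j L k :
  Lay N (j + L) k = \sum_(0 <= v < b ^ L) Lay (N * b ^ L + v) j k.
Proof.
rewrite /Lay expnD (mulnC (b ^ j)%N) block_sum; apply: eq_bigr => v _.
apply: eq_bigr => i _; congr (g _ _); ring.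
Qed.

Lemma Lay0 N k : Lay N 0 k = g k N.
Proof. by rewrite /Lay expn0 big_nat1 muln1 addn0. Qed.

Fixpoint B (j k c : nat) : R :=
  match j with
  | 0 => (c == k)%:R
  | j'.+1 => ((b.-1)%:R * B j' k c + B j' k c.+1) / b%:R
  end.

Lemma bR : 0 < b%:R :> R.
Proof. rewrite ltr0n; lia. Qed.

Lemma B_ge0 j k c : 0 <= B j k c.
Proof.
elim: j c => [|j IH] c /=; first by rewrite ler0n.
apply: divr_ge0; last by apply: ltW; apply: bR.
by apply: addr_ge0 => //; apply: mulr_ge0 => //; rewrite ler0n.
Qed.

Lemma B_hi j k c : (k < c)%N -> B j k c = 0.
Proof.
elim: j c => [|j IH] c /= h; first by case: eqP => //; lia.
by rewrite !IH ?mulr0 ?add0r ?mul0r //; lia.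
Qed.

Lemma B_lo j k c : (c + j < k)%N -> B j k c = 0.
Proof.
elim: j c => [|j IH] c /= h; first by case: eqP => //; lia.
by rewrite !IH ?mulr0 ?add0r ?mul0r //; lia.
Qed.

End Real.


Section Real3.
Variables (R : realFieldType) (b d : nat).
Hypothesis hb : (2 <= b)%N.
Hypothesis hd : (d < b)%N.
Local Open Scope ring_scope.

Lemma sum_Bd (F : nat -> R) c c' :
  \sum_(0 <= a < b) F (if a == d then c' else c) = (b.-1)%:R * F c + F c'.
Proof.
rewrite (big_cat_nat _ (n:=d)) //= ?(ltnW hd) // [\sum_(d <= i < b) _]big_ltn // eqxx.
rewrite (eq_big_nat _ _ (F2 := fun _ => F c)); last first.
  by move=> i /andP[_ h]; case: eqP => //; lia.
rewrite [X in _ + (_ + X)](eq_big_nat _ _ (F2 := fun _ => F c)); last first.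
  by move=> i /andP[h _]; case: eqP => //; lia.
rewrite !sumr_const_nat addrCA -mulrnDr addrC mulr_natl; congr (F c *+ _ + _).
lia.
Qed.

Lemma Lay_bound j N k : (0 < N)%N ->
  B R b j k (kcount b d N) / (N.+1)%:R <= Lay R b d N j k <=
  B R b j k (kcount b d N) / N%:R.
Proof.
elim: j N => [|j IH] N N0.
  rewrite Lay0 /g /=; case: eqP => _; rewrite ?mul0r ?lexx // !mul1r.
  by rewrite lexx andbT lef_pV2 ?posrE ?ltr0n // ler_nat.
rewrite -addn1 Lay_split // expn1 addn1.
set c := kcount b d N.
have kc a : (a < b)%N -> kcount b d (N * b + a) = if a == d then c.+1 else c.
  by move=> ab; rewrite kcountMb //; case: eqP.
have Nb0 : 0 < (N * b)%:R :> R by rewrite ltr0n muln_gt0 N0; lia.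
have bR : 0 < b%:R :> R by rewrite ltr0n; lia.
apply/andP; split.
- apply: le_trans (_ : \sum_(0 <= a < b) B R b j k (if a == d then c.+1 else c) /
     ((N * b)%:R + b%:R) <= _).
    rewrite -mulr_suml sum_Bd /=.
    rewrite [X in _ <= _ / X](_ : _ = (N.+1)%:R * b%:R); last first.
      by rewrite -natrM -natrD; congr _%:R; lia.
    by rewrite invfM mulrA -!mulrA [X in _ * X]mulrC.
  rewrite big_nat_cond [X in _ <= X]big_nat_cond; apply: ler_sum => a /andP[/andP[_ ab] _].
  have := IH (N * b + a)%N; rewrite kc // => /(_ ltac:(lia)) /andP[h _].
  apply: le_trans h; apply: ler_wpM2l; first exact: B_ge0.
  rewrite lef_pV2 ?posrE ?ltr0n; try lia.
  by rewrite -natrD ler_nat; lia.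
  by apply: addr_gt0.
- apply: (@le_trans _ _ (\sum_(0 <= a < b) B R b j k (if a == d then c.+1 else c) /
     (N * b)%:R)).
    rewrite big_nat_cond [X in _ <= X]big_nat_cond; apply: ler_sum => a /andP[/andP[_ ab] _].
    have := IH (N * b + a)%N; rewrite kc // => /(_ ltac:(lia)) /andP[_ h].
    apply: le_trans h _; apply: ler_wpM2l; first exact: B_ge0.
    rewrite lef_pV2 ?posrE ?ltr0n; try lia.
    by rewrite ler_nat; lia.
  rewrite -mulr_suml sum_Bd /= natrM invfM mulrA.
  by rewrite -!mulrA [X in _ * X]mulrC.
Qed.

End Real3.


Section Lim.
Variables (R : realType) (b : nat).
Hypothesis hb : (2 <= b)%N.
Local Open Scope classical_set_scope.
Local Open Scope ring_scope.

Definition C J k c : R := \sum_(0 <= j < J) B R b j k c.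

Lemma C_rec J k c : C J.+1 k c =
  (c == k)%:R + ((b.-1)%:R * C J k c + C J k c.+1) / b%:R.
Proof.
rewrite /C big_nat_recl //=; congr (_ + _).
rewrite mulr_sumr -big_split /= mulr_suml; apply: eq_bigr => j _ //.
Qed.

Lemma C_hi J k c : (k < c)%N -> C J k c = 0.
Proof. move=> h; rewrite /C big1 // => j _; exact: B_hi. Qed.

Lemma C_ge0 J k c : 0 <= C J k c.
Proof. apply: sumr_ge0 => j _; exact: B_ge0. Qed.

Lemma C_le J k c : C J k c <= b%:R.
Proof.
have bR : 2 <= b%:R :> R by rewrite (ler_nat R 2 b).
have bm : (b.-1)%:R = b%:R - 1 :> R by rewrite -subn1 natrB //; lia.
elim: J c => [|J IH] c; first by rewrite /C big_geq // ler0n.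
rewrite C_rec bm.
have z2 := bR.
have := IH c; have := IH c.+1; have := C_ge0 J k c; have := C_ge0 J k c.+1.
case: (eqVneq c k) => [->|ne].
- rewrite (C_hi J (k:=k) (c:=k.+1)) // addr0 /= mulr1n => h0 h1 h2 h3.
  rewrite -lerBrDl ler_pdivrMr; last lra.
  nra.
- rewrite /= mulr0n add0r => h0 h1 h2 h3; rewrite ler_pdivrMr; last lra.
  nra.
Qed.

Lemma C_nd k c : nondecreasing_seq (fun J => C J k c).
Proof.
apply/nondecreasing_seqP => J; rewrite /C big_nat_recr //= lerDl; exact: B_ge0.
Qed.

Lemma C_cvg k c : cvgn (fun J => C J k c).
Proof.
apply: nondecreasing_is_cvgn; first exact: C_nd.
by exists b%:R => _ [J _ <-]; apply: C_le.
Qed.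

Lemma C_lim k c : (c <= k)%N -> limn (fun J => C J k c) = b%:R.
Proof.
have bR : 2 <= b%:R :> R by rewrite (ler_nat R 2 b).
have bm : (b.-1)%:R = b%:R - 1 :> R by rewrite -subn1 natrB //; lia.
set l := fun c => limn (fun J => C J k c).
have eq c' : l c' = (c' == k)%:R + ((b.-1)%:R * l c' + l c'.+1) / b%:R.
  have h1 : (fun J => C J.+1 k c') @ \oo --> l c'.
    have hc : (fun J => C J k c') @ \oo --> l c' := C_cvg (k:=k) (c:=c').
    by move: hc; rewrite -cvg_shiftS.
  have h2 : (fun J => C J.+1 k c') @ \oo -->
      (c' == k)%:R + ((b.-1)%:R * l c' + l c'.+1) / b%:R.
    under eq_fun do rewrite C_rec.
    apply: cvgD; first exact: cvg_cst.
    apply: cvgMl; apply: cvgD; last exact: C_cvg.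
    by apply: cvgMr; exact: C_cvg.
  exact: cvg_unique h1 h2.
have hi c' : (k < c')%N -> l c' = 0.
  move=> h; rewrite /l (_ : (fun J => C J k c') = fun=> 0); first exact: lim_cst.
  by apply: funext => J; apply: C_hi.
move=> ck; rewrite -(subKn ck); elim: (k - c)%N (leq_subr c k) => [|i IH] hi'.
- rewrite subn0; change (l k = b%:R); have := eq k.
  rewrite eqxx (hi k.+1) // addr0 bm /= mulr1n; set t := l k => e.
  have e2 : t * b%:R = b%:R + (b%:R - 1) * t.
    by rewrite {1}e mulrDl divfK //; lra.
  nra.
- change (l (k - i.+1)%N = b%:R); have := eq (k - i.+1)%N; rewrite (_ : ((k - i.+1).+1 = k - i)%N); last lia.
  rewrite (_ : l (k - i)%N = b%:R); last by apply: IH; lia.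
  rewrite (_ : (k - i.+1 == k)%N = false); last by apply/eqP; lia.
  rewrite /= mulr0n add0r bm; set t := l _ => e.
  have e2 : t * b%:R = (b%:R - 1) * t + b%:R.
    by rewrite {1}e divfK //; lra.
  nra.
Qed.

End Lim.


Section Adm.
Variables (R : realFieldType) (b d n : nat).
Hypothesis hb : (2 <= b)%N.
Hypothesis hn : (0 < n)%N.

Lemma div_layer j m : (n * b ^ j <= m < n.+1 * b ^ j)%N -> m %/ b ^ j = n.
Proof.
have p : (0 < b ^ j)%N by rewrite expn_gt0; lia.
move=> /andP[h1 h2]; apply/eqP; rewrite eqn_leq leq_divRL // h1 /=.
by rewrite -ltnS ltn_divLR // (leq_ltn_trans _ h2).
Qed.

Lemma adm_layer k j m : (n * b ^ j <= m < n.+1 * b ^ j)%N ->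
  admissible b d n k m = (kcount b d m == k).
Proof.
move=> h; have e := div_layer h.
have bl : blen b m = (blen b n + j)%N by rewrite (blen_pow hb (j := j)) e ?hn.
have p : (0 < b ^ j)%N by rewrite expn_gt0; lia.
rewrite /admissible /ld bl addKn e eqxx leq_addr /=.
have -> : (0 < m)%N.
  by case/andP: h => h _; apply: leq_trans h; rewrite muln_gt0 hn.
by [].
Qed.

Lemma adm_in k m : admissible b d n k m ->
  exists j, (n * b ^ j <= m < n.+1 * b ^ j)%N.
Proof.
case/and4P => m0 _ /eqP e _; exists (blen b m - blen b n)%N.
move: e; rewrite /ld; set q := (b ^ _)%N => e.
have p : (0 < q)%N by rewrite expn_gt0; lia.
by rewrite -e -leq_divRL // leqnn /= -ltn_divLR // e.
Qed.

Local Open Scope ring_scope.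

Definition fadm k m : R := if admissible b d n k m then (m%:R)^-1 else 0.

Lemma fadm_ge0 k m : 0 <= fadm k m.
Proof. rewrite /fadm; case: ifP => // _; by rewrite invr_ge0 ler0n. Qed.

Lemma layer_sum k j :
  \sum_(n * b ^ j <= m < n.+1 * b ^ j) fadm k m = Lay R b d n j k.
Proof.
rewrite -{1}(add0n (n * b ^ j)%N) big_addn.
rewrite (_ : (n.+1 * b ^ j - n * b ^ j = b ^ j)%N); last by rewrite mulSn; lia.
rewrite big_nat_cond [X in _ = X]big_nat_cond.
apply: eq_bigr => i /andP[/andP[_ hi] _]; rewrite /fadm /g addnC.
have -> // : admissible b d n k (n * b ^ j + i) = (kcount b d (n * b ^ j + i) == k).
apply: (adm_layer k (j:=j)); rewrite mulSn; apply/andP; split; lia.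
Qed.

Lemma lt_pow i j : (i <= j)%N -> (b ^ i <= b ^ j)%N.
Proof. by move=> h; rewrite leq_pexp2l //; lia. Qed.

Lemma gap_zero k J m : (n.+1 * b ^ J <= m < n * b ^ J.+1)%N -> fadm k m = 0.
Proof.
move=> /andP[h1 h2]; rewrite /fadm; case: ifP => // /adm_in [j /andP[h3 h4]].
case: (leqP j J) => hj.
- have := lt_pow hj; move: h1 h4; nia.
- have := lt_pow hj; move: h2 h3; nia.
Qed.

Lemma psum_layers k J :
  \sum_(0 <= m < n.+1 * b ^ J) fadm k m = \sum_(0 <= j < J.+1) Lay R b d n j k.
Proof.
elim: J => [|J IH].
  rewrite big_nat1 -layer_sum expn0 !muln1 (big_cat_nat _ (n := n)) //=.
  rewrite big1_seq ?add0r // => m; rewrite mem_index_iota => /andP[_ h].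
  rewrite /fadm; case: ifP => // /adm_in [j /andP[h3 _]].
  have : (1 <= b ^ j)%N by rewrite expn_gt0; lia.
  move: h h3; nia.
have p : (0 < b ^ J)%N by rewrite expn_gt0; lia.
have s1 : (n.+1 * b ^ J <= n * b ^ J.+1)%N by rewrite expnS; move: p hn hb; nia.
have s2 : (n * b ^ J.+1 <= n.+1 * b ^ J.+1)%N by rewrite leq_mul2r leqnSn orbT.
rewrite big_nat_recr //= -IH.
rewrite [LHS](big_cat_nat _ (n := (n.+1 * b ^ J)%N)) //=; last first.
  by apply: leq_trans s1 s2.
congr (_ + _).
rewrite [LHS](big_cat_nat _ (n := (n * b ^ J.+1)%N)) //= layer_sum.
rewrite big1_seq ?add0r // => m; rewrite mem_index_iota => h.
exact: gap_zero h.
Qed.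

End Adm.


Section Main.
Variables (R : realType) (b d n : nat).
Hypothesis hb : (2 <= b)%N.
Hypothesis hd : (d < b)%N.
Hypothesis hn : (0 < n)%N.
Local Open Scope classical_set_scope.
Local Open Scope ring_scope.

Let kn := kcount b d n.

Lemma Lay_lo j k : (kn + j < k)%N -> Lay R b d n j k = 0.
Proof.
move=> h; apply/eqP; rewrite eq_le Lay_ge0 andbT.
have /andP[_ h2] := Lay_bound R hb hd j k hn.
by rewrite (B_lo R hb h) mul0r in h2.
Qed.

Lemma kc_le L v : (v < b ^ L)%N -> (kcount b d (n * b ^ L + v) <= kn + L)%N.
Proof.
move=> hv; have := kcount_pow d hb L (n * b ^ L + v).
rewrite (div_layer hb hn (j := L)) //.
rewrite mulSn; apply/andP; split; lia.
Qed.

Lemma T_split L k J : (kn + L <= k)%N ->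
  \sum_(0 <= m < n.+1 * b ^ (J + L)) fadm R b d n k m =
  \sum_(0 <= v < b ^ L) \sum_(0 <= j < J.+1) Lay R b d (n * b ^ L + v) j k.
Proof.
move=> hk; rewrite psum_layers // (big_cat_nat _ (n := L)) //=; last lia.
rewrite big1_seq ?add0r; last first.
  move=> j; rewrite mem_index_iota => /andP[_ hj]; apply: Lay_lo; lia.
rewrite -{1}(add0n L) big_addn (_ : ((J + L).+1 - L = J.+1)%N); last lia.
rewrite exchange_big /=; apply: eq_bigr => j _; exact: Lay_split.
Qed.

Lemma inner_bounds N k J : (0 < N)%N -> (kcount b d N <= k)%N ->
  C R b J k (kcount b d N) / (N.+1)%:R <= \sum_(0 <= j < J) Lay R b d N j k <=
  C R b J k (kcount b d N) / N%:R.
Proof.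
move=> N0 hk; rewrite /C !mulr_suml; apply/andP; split; apply: ler_sum => j _;
  have /andP[h1 h2] := Lay_bound R hb hd j k N0; done.
Qed.

Definition hi L := b%:R * \sum_(0 <= v < b ^ L) ((n * b ^ L + v)%N%:R)^-1 : R.
Definition lo L := b%:R * \sum_(0 <= v < b ^ L) ((n * b ^ L + v).+1%:R)^-1 : R.
Definition y L k J := \sum_(0 <= v < b ^ L)
  C R b J.+1 k (kcount b d (n * b ^ L + v)) / ((n * b ^ L + v).+1)%:R.

Lemma fadm_sum_mono M M' k : (M <= M')%N ->
  \sum_(0 <= m < M) fadm R b d n k m <= \sum_(0 <= m < M') fadm R b d n k m.
Proof.
move=> h; rewrite [X in _ <= X](big_cat_nat _ (n := M)) //= lerDl.
by apply: sumr_ge0 => m _; apply: fadm_ge0.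
Qed.

Lemma psum_le_hi L k M : (kn + L <= k)%N ->
  \sum_(0 <= m < M) fadm R b d n k m <= hi L.
Proof.
move=> hk.
have hM : (M <= n.+1 * b ^ (M + L))%N.
  have := ltn_expl (M + L) hb; nia.
apply: le_trans (fadm_sum_mono k hM) _.
rewrite T_split // /hi mulr_sumr big_nat_cond [X in _ <= X]big_nat_cond.
apply: ler_sum => v /andP[/andP[_ hv] _].
have N0 : (0 < n * b ^ L + v)%N by rewrite addn_gt0 muln_gt0 hn expn_gt0; lia.
have /andP[_ h] := inner_bounds M.+1 N0 (leq_trans (kc_le hv) hk).
apply: le_trans h _; rewrite ler_wpM2r ?invr_ge0 ?ler0n //; exact: C_le.
Qed.

Lemma y_le_psum L k J : (kn + L <= k)%N ->
  y L k J <= \sum_(0 <= m < n.+1 * b ^ (J + L)) fadm R b d n k m.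
Proof.
move=> hk; rewrite T_split // /y big_nat_cond [X in _ <= X]big_nat_cond.
apply: ler_sum => v /andP[/andP[_ hv] _].
have N0 : (0 < n * b ^ L + v)%N by rewrite addn_gt0 muln_gt0 hn expn_gt0; lia.
by have /andP[h _] := inner_bounds J.+1 N0 (leq_trans (kc_le hv) hk).
Qed.

Lemma sum_cvg (f : nat -> nat -> R) (l : nat -> R) M :
  (forall v, (v < M)%N -> (fun J => f J v) @ \oo --> l v) ->
  (fun J => \sum_(0 <= v < M) f J v) @ \oo --> \sum_(0 <= v < M) l v.
Proof.
elim: M => [|M IH] h.
  rewrite big_geq //; under eq_fun do rewrite big_geq //; exact: cvg_cst.
rewrite big_nat_recr //; under eq_fun do rewrite big_nat_recr //.
apply: cvgD; first by apply: IH => v hv; apply: h; lia.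
by apply: h.
Qed.

Lemma y_cvg L k : (kn + L <= k)%N -> y L k @ \oo --> lo L.
Proof.
move=> hk; rewrite /lo mulr_sumr; apply: sum_cvg => v hv.
apply: cvgMl.
have hc := @C_cvg R b hb k (kcount b d (n * b ^ L + v)).
rewrite (C_lim R hb (leq_trans (kc_le hv) hk)) in hc.
by move: hc; rewrite -cvg_shiftS.
Qed.

End Main.


Section Ser.
Variables (R : realType) (b d n : nat).
Hypothesis hb : (2 <= b)%N.
Hypothesis hd : (d < b)%N.
Hypothesis hn : (0 < n)%N.
Local Open Scope classical_set_scope.
Local Open Scope ring_scope.

Let kn := kcount b d n.

Lemma ps_eq k M :
  (\sum_(0 <= m < M | admissible b d n k m) ((m%:R : R)^-1)%:E)%E =
  (\sum_(0 <= m < M) fadm R b d n k m)%:E.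
Proof.
rewrite sumEFin big_mkcond /=; congr _%:E; apply: eq_bigr => m _ //.
Qed.

Lemma bnd L k : (kn + L <= k)%N ->
  let S := (\sum_(m <oo | admissible b d n k m) ((m%:R : R)^-1)%:E)%E in
  S \is a fin_num /\ lo R b n L <= fine S <= hi R b n L.
Proof.
move=> hk S.
have cv : cvgn (fun M => (\sum_(0 <= m < M | admissible b d n k m)
    ((m%:R : R)^-1)%:E)%E).
  apply: is_cvg_nneseries => m _ _; by rewrite lee_fin invr_ge0 ler0n.
have ub : (S <= (hi R b n L)%:E)%E.
  apply: lime_le => //; apply: nearW => M.
  by rewrite ps_eq lee_fin; apply: psum_le_hi.
have lb J : ((y R b d n L k J)%:E <= S)%E.
  apply: le_trans (nneseries_lim_ge (n.+1 * b ^ (J + L))%N _); last first.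
    move=> m _ _; by rewrite lee_fin invr_ge0 ler0n.
  by rewrite ps_eq lee_fin; apply: y_le_psum.
have y0 : 0 <= y R b d n L k 0.
  apply: sumr_ge0 => v _; apply: divr_ge0; [exact: C_ge0 | exact: ler0n].
have S0 : (0 <= S)%E by apply: le_trans (lb 0%N); rewrite lee_fin.
have fS : S \is a fin_num.
  by rewrite ge0_fin_numE // (le_lt_trans ub) // ltry.
split => //.
have eS := fineK fS.
apply/andP; split; last by rewrite -lee_fin eS.
rewrite -(cvg_lim _ (y_cvg hb hd hn hk)) //.
apply: limr_le; first by apply: cvgP; exact: (y_cvg hb hd hn hk).
apply: nearW => J; by rewrite -lee_fin eS.
Qed.

End Ser.


Section LnB.
Variables (R : realType) (b n : nat).
Hypothesis hb : (2 <= b)%N.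
Hypothesis hn : (0 < n)%N.
Local Open Scope ring_scope.

Lemma ln_step (x : R) : 0 < x ->
  (x + 1)^-1 <= ln (x + 1) - ln x <= x^-1.
Proof.
move=> x0; have x1 : 0 < x + 1 by lra.
apply/andP; split.
- suff h : ln x - ln (x + 1) <= - (x + 1)^-1 by lra.
  have -> : ln x - ln (x + 1) = ln (1 + - (x + 1)^-1).
    rewrite -ln_div ?posrE //; congr ln; field; lra.
  apply: le_ln1Dx; rewrite ltrNl opprK invf_lt1 //; lra.
- have -> : ln (x + 1) - ln x = ln (1 + x^-1).
    rewrite -ln_div ?posrE //; congr ln; field; lra.
  apply: le_ln1Dx; apply: lt_le_trans (_ : 0 <= _); [lra | by rewrite invr_ge0 ltW].
Qed.

Lemma ln_bounds L : lo R b n L <= b%:R * ln (1 + (n%:R)^-1) <= hi R b n L.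
Proof.
set N := (n * b ^ L)%N; set M := (b ^ L)%N.
have pM : (0 < M)%N by rewrite expn_gt0; lia.
have pN : (0 < N)%N by rewrite muln_gt0 hn.
have e : ln (1 + (n%:R)^-1) =
   \sum_(0 <= v < M) (ln ((N + v).+1)%:R - ln (N + v)%:R) :> R.
  rewrite (@telescope_sumr_eq _ 0 M (fun v => ln (N + v)%:R)) //=; last first.
    by move=> v _; rewrite addnS.
  rewrite -ln_div ?posrE ?ltr0n ?addn0 //; last lia.
  congr ln; rewrite /N /M natrD natrM.
  have h1 : (n%:R : R) != 0 by rewrite pnatr_eq0 -lt0n.
  have h2 : ((b ^ L)%N%:R : R) != 0 by rewrite pnatr_eq0 -lt0n.
  by field; rewrite h1 h2.
have bge : 0 <= b%:R :> R by rewrite ler0n.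
rewrite e /lo /hi; apply/andP; split; apply: ler_wpM2l => //;
  rewrite big_nat_cond [X in _ <= X]big_nat_cond; apply: ler_sum => v _;
  have := ln_step (x := (N + v)%N%:R); rewrite -natr1 ltr0n => /(_ ltac:(lia)) /andP[h1 h2] //.
Qed.

Lemma gap L : hi R b n L - lo R b n L <= b%:R / (L.+1)%:R.
Proof.
set N := (n * b ^ L)%N; set M := (b ^ L)%N.
have pM : (L < M)%N by apply: ltn_expl.
have pN : (M <= N)%N by rewrite /N leq_pmull.
rewrite /hi /lo -mulrBr -sumrB.
rewrite (@telescope_sumr_eq _ 0 M (fun v => - ((N + v)%N%:R)^-1)) //=; last first.
  by move=> v _; rewrite addnS opprK addrC.
rewrite addn0 ler_wpM2l ?ler0n //.
have h1 : 0 <= ((N + M)%N%:R : R)^-1 by rewrite invr_ge0 ler0n.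
apply: (@le_trans _ _ ((N%:R)^-1)); first lra.
rewrite lef_pV2 ?posrE ?ltr0n //; try lia.
rewrite ler_nat; lia.
Qed.

End LnB.

Unset Implicit Arguments.
Local Open Scope classical_set_scope.
Local Open Scope ring_scope.
Local Open Scope ereal_scope.

Theorem mainTheorem16 (R : realType) (b d n : nat)
  (hb : (2 <= b)%N) (hd : (d < b)%N) (hn : (0 < n)%N) :
  (fun k : nat => \sum_(m <oo | admissible b d n k m) ((m%:R : R)^-1)%:E)
    @ \oo --> ((b%:R * ln (1 + (n%:R)^-1))%:E : \bar R).
Proof.
set kn := kcount b d n.
apply/fine_cvgP; split.
  apply: filterS (nbhs_infty_ge (kn + 0)) => k hk.
  by have [] := bnd R hb hd hn hk.
apply/cvgrPdist_le => e e0.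
have [L hL] : exists L : nat, (b%:R / e <= L%:R)%R.
  have [N _ HN] := nbhs_infty_ger (b%:R / e : R).
  by exists N; apply: HN => /=.
apply: filterS (nbhs_infty_ge (kn + L)) => k hk /=.
have [_ /andP[h1 h2]] := bnd R hb hd hn hk.
have /andP[t1 t2] := ln_bounds R hb hn L.
have g := gap R hb hn L.
have he : (b%:R / (L.+1)%:R <= e)%R.
  rewrite ler_pdivrMr ?ltr0n // -natr1.
  move: hL; rewrite ler_pdivrMr // => hL.
  rewrite mulrDr mulr1; lra.
rewrite ler_norml; apply/andP; split.
all: set s := fine _ in h1 h2 *; set t := (b%:R * _)%R in t1 t2 *; set hh := hi _ _ _ _ in g h2 t2; set ll := lo _ _ _ _ in g h1 t1; set q := (b%:R / _)%R in g he; clear -h1 h2 t1 t2 g he; lra.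
Qed.
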